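(* Let $X$ be a long space and let $M$ be a metrizable topological group. For a compact subset $K\subseteq X$, let $C_K(X,M)$ denote the subgroup of $C_{cpt}(X,M)$ consisting of the functions with support contained in $K$, with the subspace topology. Then the family $\{C_K(X,M)\}_{K\in\mathscr{K}(X)}$ (indexed by the set $\mathscr{K}(X)$ of compact subsets of $X$ ordered by inclusion, with inclusions as bonding maps) satisfies ACP, and $$\operatorname*{colim}_{K\in\mathscr{K}(X)} C_K(X,M)=C_{cpt}(X,M),$$ i.e. the colimit space topology on $C_{cpt}(X,M)=\bigcup_{K}C_K(X,M)$ coincides with the uniform topology. Furthermore, if $M$ is a Banach space over $\mathbb{K}\in\{\mathbb{R},\mathbb{C}\}$, then $C_{cpt}(X,M)$ (with the uniform topology) is a Banach space, and it is the colimit of $\{C_K(X,M)\}_{K\in\mathscr{K}(X)}$ in the category $\mathsf{TVS}_{\mathbb K}$ of topological vector spaces over $\mathbb K$ and continuous linear maps, and in its full subcategory $\mathsf{LCTVS}_{\mathbb K}$ of locally convex spaces.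
   Context: A Hausdorff space $X$ is a long space if every $\sigma$-compact subset of $X$ has compact closure (equivalently, every countable family of compact subsets of $X$ is contained in a single compact subset). For a topological space $X$ and topological group $M$, $C_{cpt}(X,M)$ is the group (under pointwise operations) of continuous $f\colon X\to M$ with compact support, where the support of $f$ is $\operatorname{cl}_X\{x\in X\mid f(x)\neq e_M\}$. The uniform topology on $C_{cpt}(X,M)$ is the topology induced by the metric $d(f_1,f_2)=\sup_{x\in X}\rho(f_1(x),f_2(x))$, where $\rho$ is a metric compatible with the topology of $M$. For a directed family $\{G_\alpha\}_{\alpha\in\mathbb I}$ of topological groups whose bonding maps are inclusions that are closed embeddings, with union $G=\bigcup_\alpha G_\alpha$, the colimit space topology is $\mathscr T=\{U\subseteq G\mid U\cap G_\alpha \text{ is open in } G_\alpha \text{ for all }\alpha\}$; the family satisfies ACP (the algebraic colimit property) if $\mathscr T$ coincides with the finest group topology on $G$ making all inclusions $G_\alpha\to G$ continuous, equivalently if $(G,\mathscr T)$ is a topological group. The notation $\operatorname{colim}$ refers to $G$ with the colimit space topology. *)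

(* Defs.v *)
From HB Require Import structures.
From mathcomp Require Import all_boot all_order all_algebra.
From mathcomp Require Import all_classical all_reals all_analysis.
From mathcomp Require Import complex.

Set Implicit Arguments.
Unset Strict Implicit.
Unset Printing Implicit Defensive.

Import Order.TTheory GRing.Theory Num.Theory.
Local Open Scope classical_set_scope.
Local Open Scope ring_scope.

Definition sigma_compact (X : topologicalType) (S : set X) : Prop :=
  exists A : nat -> set X, (forall n, compact (A n)) /\ S = \bigcup_n A n.

Definition long_space (X : topologicalType) : Prop :=
  hausdorff_space X /\
  forall S : set X, sigma_compact S -> compact (closure S).

Definition is_topgroup (M : topologicalType) (mul : M -> M -> M) (inv : M -> M)
    (e : M) : Prop :=
  [/\ forall x y z, mul x (mul y z) = mul (mul x y) z,
      forall x, mul e x = x /\ mul x e = x,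
      forall x, mul (inv x) x = e /\ mul x (inv x) = e,
      continuous (fun p : M * M => mul p.1 p.2) &
      continuous inv].

Definition compatible_metric (R : realType) (M : topologicalType)
    (rho : M -> M -> R) : Prop :=
  [/\ forall x y, 0 <= rho x y,
      forall x y, rho x y = 0 <-> x = y,
      forall x y, rho x y = rho y x,
      forall x y z, rho x z <= rho x y + rho y z &
      forall U : set M, open U <->
        (forall x, U x -> exists2 eps : R, 0 < eps &
           forall y, rho x y < eps -> U y)].

Section FunSpaces.
Context (X M : topologicalType) (e : M).

Definition supp (f : X -> M) : set X := closure [set x | f x <> e].

Definition Ccpt : set (X -> M) :=
  [set f | continuous f /\ compact (supp f)].

Definition CK (K : set X) : set (X -> M) :=
  [set f | Ccpt f /\ supp f `<=` K].

Context (R : numDomainType) (rho : M -> M -> R).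

(** [dlt f g eps] : d(f,g) = sup_x rho(f x, g x) < eps, unfolded as
    "some upper bound of {rho (f x) (g x)} is < eps". *)
Definition dlt (f g : X -> M) (eps : R) : Prop :=
  exists2 delta : R, delta < eps & forall x, rho (f x) (g x) <= delta.

Definition uopen (U : set (X -> M)) : Prop :=
  U `<=` Ccpt /\
  forall f, U f -> exists2 eps : R, 0 < eps &
     forall g, Ccpt g -> dlt f g eps -> U g.

Definition sub_open (S V : set (X -> M)) : Prop :=
  exists2 W, uopen W & V = W `&` S.

(** open sets of the colimit space topology of {C_K}_{K compact} *)
Definition colim_open (U : set (X -> M)) : Prop :=
  U `<=` Ccpt /\ forall K : set X, compact K -> sub_open (CK K) (U `&` CK K).

End FunSpaces.

Section GroupTop.
Context (X M : topologicalType) (mul : M -> M -> M) (inv : M -> M).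

Definition fmul (f g : X -> M) : X -> M := fun x => mul (f x) (g x).
Definition finv (f : X -> M) : X -> M := fun x => inv (f x).

Definition is_topology (G : set (X -> M)) (tau : set (X -> M) -> Prop) : Prop :=
  [/\ forall U, tau U -> U `<=` G,
      tau G,
      forall F : set (set (X -> M)), (forall U, F U -> tau U) ->
        tau (\bigcup_(U in F) U) &
      forall U V, tau U -> tau V -> tau (U `&` V)].

Definition is_group_topology (G : set (X -> M)) (tau : set (X -> M) -> Prop) :
    Prop :=
  [/\ is_topology G tau,
      forall f g, G f -> G g -> G (fmul f g),
      forall f, G f -> G (finv f),
      (forall U f g, tau U -> G f -> G g -> U (fmul f g) ->
         exists V W, [/\ tau V, tau W, V f, W g &
           forall f' g', V f' -> W g' -> U (fmul f' g')]) &
      forall U, tau U -> tau [set f | G f /\ U (finv f)]].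

End GroupTop.

(** * ACP for the family {C_K(X,M)}_{K compact}, with union C_cpt(X,M):
    the colimit space topology is the finest group topology on C_cpt(X,M)
    making all inclusions C_K(X,M) -> C_cpt(X,M) continuous. *)
Definition ACP_CK (X M : topologicalType) (mul : M -> M -> M) (inv : M -> M)
    (e : M) (R : numDomainType) (rho : M -> M -> R) : Prop :=
  is_group_topology mul inv (Ccpt e : set (X -> M)) (colim_open e rho) /\
  forall tau : set (X -> M) -> Prop,
    is_group_topology mul inv (Ccpt e : set (X -> M)) tau ->
    (forall K : set X, compact K ->
       forall U, tau U -> sub_open e rho (CK e K) (U `&` CK e K)) ->
    forall U, tau U -> colim_open e rho U.

Section Banach.
Context (K : numFieldType) (X : topologicalType) (M : completeNormedModType K).

Definition nrho (x y : M) : K := `|x - y|.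

Notation Cc := (Ccpt (0 : M) : set (X -> M)).
Notation CKb C := (CK (0 : M) C : set (X -> M)).

Definition Ccpt_banach : Prop :=
  [/\ Cc (fun _ => 0),
      forall (a : K) f g, Cc f -> Cc g -> Cc (fun x => a *: f x + g x),
      forall f, Cc f -> exists B : K, forall x, `|f x| <= B &
      forall u : nat -> X -> M, (forall n, Cc (u n)) ->
        (forall eps : K, 0 < eps -> exists N, forall m n, (N <= m)%N -> (N <= n)%N ->
            dlt nrho (u m) (u n) eps) ->
        exists2 f, Cc f & forall eps : K, 0 < eps ->
            exists N, forall n, (N <= n)%N -> dlt nrho (u n) f eps].

Definition lin_on (E : lmodType K) (S : set (X -> M)) (psi : (X -> M) -> E) :=
  forall (a : K) f g, S f -> S g ->
    psi (fun x => a *: f x + g x) = a *: psi f + psi g.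

Definition cont_on (E : topologicalType) (S : set (X -> M)) (psi : (X -> M) -> E) :=
  forall W : set E, open W -> sub_open 0 nrho S (S `&` psi @^-1` W).

Definition colim_univ (E : topologicalLmodType K) : Prop :=
  forall phi : set X -> (X -> M) -> E,
    (forall C, compact C -> lin_on (CKb C) (phi C) /\ cont_on (CKb C) (phi C)) ->
    (forall C D, compact C -> compact D -> C `<=` D ->
        forall f, CKb C f -> phi D f = phi C f) ->
    (exists psi : (X -> M) -> E,
        [/\ lin_on Cc psi, cont_on Cc psi &
            forall C, compact C -> forall f, CKb C f -> psi f = phi C f]) /\
    (forall psi1 psi2 : (X -> M) -> E,
        (lin_on Cc psi1 /\ cont_on Cc psi1 /\
           forall C, compact C -> forall f, CKb C f -> psi1 f = phi C f) ->
        (lin_on Cc psi2 /\ cont_on Cc psi2 /\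
           forall C, compact C -> forall f, CKb C f -> psi2 f = phi C f) ->
        forall f, Cc f -> psi1 f = psi2 f).

Definition incl_cocone : Prop :=
  forall C, compact C ->
    forall U, uopen 0 nrho U -> sub_open 0 nrho (CKb C) (U `&` CKb C).

Definition banach_part : Prop :=
  [/\ Ccpt_banach,
      incl_cocone,
      (forall E : topologicalLmodType K, colim_univ E) &
      (forall E : tvsType K, colim_univ E)].

End Banach.

(* Main.v *)
Require Import Defs.
From HB Require Import structures.
From mathcomp Require Import all_boot all_order all_algebra.
From mathcomp Require Import all_classical all_reals all_analysis.
From mathcomp Require Import complex.

Local Open Scope classical_set_scope.
Local Open Scope ring_scope.
Local Open Scope complex_scope.


From mathcomp Require Import ring.
Import Order.TTheory GRing.Theory Num.Theory.

Module Helpers.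
Local Open Scope classical_set_scope.
Local Open Scope ring_scope.

Section Gen.
Context (X M : topologicalType) (e : M) (R : numDomainType) (rho : M -> M -> R).

Lemma dlt_mono (f g : X -> M) a b : dlt rho f g a -> a <= b -> dlt rho f g b.
Proof. by case=> d da H ab; exists d => //; exact: lt_le_trans ab. Qed.

Lemma compact_supp_sub (f : X -> M) : Ccpt e f -> CK e (supp e f) f.
Proof. by move=> Cf; split. Qed.

Lemma uopen_colim (U : set (X -> M)) : uopen e rho U -> colim_open e rho U.
Proof.
move=> uU; split; first by case: uU.
by move=> K _; exists U.
Qed.

Lemma colim_uopen (hX : long_space X) (s : nat -> R)
   (spos : forall n, 0 < s n) (sP : forall eps, 0 < eps -> exists n, s n <= eps)
   (U : set (X -> M)) : colim_open e rho U -> uopen e rho U.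
Proof.
move=> [UC HU]; split => // f Uf.
apply: contrapT => nex.
have : forall n, exists g, [/\ Ccpt e g, dlt rho f g (s n) & ~ U g].
  move=> n; apply: contrapT => nn; apply: nex; exists (s n) => // g Cg dg.
  apply: contrapT => nUg; apply: nn; by exists g.
move=> /choice [G HG].
pose A n := if n is k.+1 then supp e (G k) else supp e f.
have cA : forall n, compact (A n).
  case=> [|k] /=; first by case: (UC _ Uf).
  by have [[_ ?] _ _] := HG k.
have cK : compact (closure (\bigcup_n A n)).
  by apply: hX.2; exists A.
have sK : forall n, A n `<=` closure (\bigcup_n A n).
  by move=> n x Ax; apply: subset_closure; exists n.
have [W uW EW] := HU _ cK.
have Wf : W f.
  have : (U `&` CK e (closure (\bigcup_n A n))) f.
    by split => //; split; [exact: UC | exact: (sK 0%N)].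
  by rewrite EW => -[].
have [eps eps0 Heps] := uW.2 f Wf.
have [n sn] := sP _ eps0.
have [Cg dg nUg] := HG n.
apply: nUg.
have : (W `&` CK e (closure (\bigcup_n A n))) (G n).
  split; first by apply: Heps => //; exact: dlt_mono dg sn.
  by split => //; exact: (sK n.+1).
by rewrite -EW => -[].
Qed.

End Gen.

Section Closed.
Context (X M : topologicalType) (e : M) (R : numDomainType) (rho : M -> M -> R).
Hypothesis rho_ge0 : forall x y, 0 <= rho x y.
Hypothesis rho_eq0 : forall x y, rho x y = 0 <-> x = y.

Lemma CK_uclosed (hX : hausdorff_space X) (C : set X) : compact C ->
  uopen e rho (Ccpt e `\` CK e C).
Proof.
move=> cC; split; first by move=> f [].
move=> f [Cf nCKf].
have [x [sx nCx]] : exists x, supp e f x /\ ~ C x.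
  apply: contrapT => nex; apply: nCKf; split => // x sx.
  apply: contrapT => nCx; apply: nex; by exists x.
have oC : open (~` C) by apply: closed_openC; exact: compact_closed.
have [y [fy nCy]] := sx _ (open_nbhs_nbhs (conj oC nCx)).
exists (rho (f y) e).
  rewrite lt_neqAle rho_ge0 andbT; apply/eqP => /esym /rho_eq0; exact: fy.
move=> g Cg [d dlt Hd]; split => // -[_ sg]; apply: nCy; apply: sg.
apply: subset_closure => /= gy; move: (Hd y); rewrite gy => H.
by move: (le_lt_trans H dlt); rewrite ltxx.
Qed.

Lemma CK_diff_open (hX : hausdorff_space X) (C D : set X) : compact C ->
  sub_open e rho (CK e D) (CK e D `\` CK e C).
Proof.
move=> cC; exists (Ccpt e `\` CK e C); first exact: CK_uclosed.
apply/seteqP; split => f.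
  by move=> [[Cf sD] nC]; split => //; split.
by move=> [[Cf nC] CD].
Qed.

End Closed.


Section Metric.
Context (R : realType) (M : topologicalType) (rho : M -> M -> R).
Hypothesis hrho : compatible_metric rho.

Lemma rho_xx x : rho x x = 0.
Proof. by case: hrho => _ H _ _ _; apply/H. Qed.

Lemma rho_ball_nbhs x r : 0 < r -> nbhs x [set y | rho x y < r].
Proof.
move=> r0; apply: open_nbhs_nbhs; split; last by rewrite /= rho_xx.
case: hrho => _ _ _ tri op; apply/op => y /= xy.
exists (r - rho x y); first by rewrite subr_gt0.
move=> z yz; apply: (le_lt_trans (tri x y z)).
by rewrite -ltrBrDl.
Qed.

Lemma nbhs_rho_ball x A : nbhs x A ->
  exists2 r, 0 < r & forall y, rho x y < r -> A y.
Proof.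
rewrite nbhsE => -[B [oB Bx] BA].
case: hrho => _ _ _ _ op; have [r r0 H] := (op B).1 oB x Bx.
by exists r => // y /H /BA.
Qed.

Lemma UC (T : topologicalType) (rT : T -> T -> R) (h : T -> M) (L : set T)
 (Tnb : forall x A, nbhs x A -> exists2 r, 0 < r & forall y, rT x y < r -> A y)
 (Tball : forall x r, 0 < r -> nbhs x [set y | rT x y < r])
 (Ttri : forall x y z, rT x z <= rT x y + rT y z)
 (hc : continuous h) (cL : compact L) eps : 0 < eps ->
 exists2 d, 0 < d & forall x y, L x -> rT x y < d -> rho (h x) (h y) < eps.
Proof.
move=> eps0.
case: hrho => _ _ sym tri _.
have H : \forall d \near 0^'+, forall x, L x ->
    forall y, rT x y < d -> rho (h x) (h y) < eps.
  apply: ((compact_near_coveringP L).1 cL R (0^'+)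
    (fun d x => forall y, rT x y < d -> rho (h x) (h y) < eps)).
  move=> x Lx.
  have e2 : 0 < eps / 2 by rewrite divr_gt0.
  have := @rho_ball_nbhs (h x) _ e2 => /hc.
  move=> /Tnb [r r0 Hr].
  have r2 : 0 < r / 2 by rewrite divr_gt0.
  near=> x' d => y xy.
  have xx' : rT x x' < r / 2 by exact: (near (Tball x _ r2) x').
  have d0 : d < r / 2 by exact: (near (nbhs_right_lt r2) d).
  apply: (le_lt_trans (tri _ (h x) _)); rewrite [eps]splitr sym.
  apply: ltrD; first by apply: Hr; apply: (lt_trans xx'); rewrite ltr_pdivrMr // ltr_pMr // ltr1n.
  apply: Hr; apply: (le_lt_trans (Ttri _ x' _)); rewrite [r]splitr.
  by apply: ltrD => //; exact: lt_trans xy d0.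
have [d [Hd d0]] := filter_ex (filterI H (nbhs_right_gt 0)).
by exists d => // x y Lx; apply: Hd.
Unshelve. all: by end_near.
Qed.

End Metric.


Set Implicit Arguments.
Unset Strict Implicit.

Arguments rho_xx {R M rho}.
Arguments rho_ball_nbhs {R M rho}.
Arguments nbhs_rho_ball {R M rho}.
Arguments UC {R M rho} hrho {T rT h L}.

Section Supp.
Context (X M : topologicalType) (e : M).

Lemma supp_closed (f : X -> M) : closed (supp e f).
Proof. exact: closed_closure. Qed.

Lemma Ccpt_sub (f g h : X -> M) : compact (supp e f) -> compact (supp e g) ->
  (forall x, f x = e -> g x = e -> h x = e) -> compact (supp e h).
Proof.
move=> cf cg H; apply: (subclosed_compact _ (compactU cf cg)); first exact: closed_closure.
rewrite /supp -closureU; apply: closureS => x /= hx.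
by apply: contrapT => /not_orP [/contrapT fx /contrapT gx]; apply: hx; exact: H.
Qed.

Lemma supp_out (f : X -> M) x : ~ supp e f x -> f x = e.
Proof. by move=> H; apply: contrapT => fx; apply: H; exact: subset_closure. Qed.

Lemma range_cpt (f : X -> M) : Ccpt e f ->
  exists2 L, compact L & forall x, L (f x).
Proof.
move=> [cf sf]; exists (f @` supp e f `|` [set e]).
  apply: compactU; last exact: compact_set1.
  by apply: continuous_compact => //; exact: continuous_subspaceT.
move=> x; have [sx|nsx] := pselect (supp e f x); first by left; exists x.
by right; rewrite /= supp_out.
Qed.

End Supp.

Lemma pair_cont (X M : topologicalType) (f g : X -> M) :
  continuous f -> continuous g -> continuous (fun x => (f x, g x)).
Proof. move=> cf cg x; apply: cvg_pair; [exact: cf | exact: cg]. Qed.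

Section TopGroup.
Context (X : topologicalType) (R : realType) (M : topologicalType)
  (mul : M -> M -> M) (inv : M -> M) (e : M) (rho : M -> M -> R).
Hypothesis hG : is_topgroup mul inv e.
Hypothesis hrho : compatible_metric rho.

Lemma inv_e : inv e = e.
Proof. by case: hG => _ H1 H2 _ _; rewrite -[inv e](H1 _).2 (H2 e).1. Qed.

Lemma fmul_Ccpt (f g : X -> M) : Ccpt e f -> Ccpt e g -> Ccpt e (fmul mul f g).
Proof.
move=> [cf sf] [cg sg]; split.
  move=> x; case: hG => _ _ _ cm _.
  apply: (@continuous_comp _ _ _ (fun x => (f x, g x)) (fun p => mul p.1 p.2)).
    exact: pair_cont.
  exact: cm.
apply: (@Ccpt_sub _ _ _ f g (fmul mul f g) sf sg) => x; rewrite /fmul => -> ->; by case: hG => _ H _ _ _; rewrite (H e).1.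
Qed.

Lemma finv_Ccpt (f : X -> M) : Ccpt e f -> Ccpt e (Defs.finv inv f).
Proof.
move=> [cf sf]; split.
  move=> x; case: hG => _ _ _ _ ci.
  exact: (@continuous_comp _ _ _ f inv x (cf x) (ci (f x))).
by apply: (@Ccpt_sub _ _ _ f f (Defs.finv inv f) sf sf) => x; rewrite /Defs.finv => -> _; rewrite inv_e.
Qed.

Lemma uopen_topology : is_topology (Ccpt e) (uopen e rho : set (X -> M) -> Prop).
Proof.
split.
- by move=> U [].
- by split => // f Cf; exists 1 => //.
- move=> F HF; split; first by move=> f [U FU Uf]; case: (HF U FU) => + _; apply.
  move=> f [U FU Uf]; have [eps eps0 H] := (HF U FU).2 f Uf.
  by exists eps => // g Cg dg; exists U => //; apply: H.
- move=> U V [UC HU] [VC HV]; split; first by move=> f [/UC].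
  move=> f [Uf Vf]; have [e1 e10 H1] := HU f Uf; have [e2 e20 H2] := HV f Vf.
  exists (Num.min e1 e2); first by rewrite lt_min e10 e20.
  move=> g Cg dg; split.
    by apply: H1 => //; apply: dlt_mono dg _; rewrite ge_min lexx.
  by apply: H2 => //; apply: dlt_mono dg _; rewrite ge_min lexx orbT.
Qed.

Lemma ball_uopen (f : X -> M) d : 0 < d ->
  uopen e rho [set g | Ccpt e g /\ dlt rho f g d].
Proof.
move=> d0; split; first by move=> g [].
move=> g [Cg [d1 d1d H1]]; exists (d - d1); first by rewrite subr_gt0.
move=> h Ch [d2 d2d H2]; split => //; exists (d1 + d2).
  by rewrite -ltrBrDl.
move=> x; case: hrho => _ _ _ tri _.
by apply: (le_trans (tri _ (g x) _)); apply: lerD.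
Qed.

Lemma ball_self (f : X -> M) d : 0 < d -> dlt rho f f d.
Proof. by move=> d0; exists 0 => // x; rewrite rho_xx. Qed.


Definition rP (p q : M * M) := Num.max (rho p.1 q.1) (rho p.2 q.2).

Lemma rP_nb (p : M * M) A : nbhs p A -> exists2 r, 0 < r & forall q, rP p q < r -> A q.
Proof.
case: p => a b [[P Q] [Pa Qb] PQA].
have [r1 r10 H1] := nbhs_rho_ball hrho _ _ Pa.
have [r2 r20 H2] := nbhs_rho_ball hrho _ _ Qb.
exists (Num.min r1 r2); first by rewrite lt_min r10 r20.
case=> a' b'; rewrite /rP /= gt_max !lt_min => /andP [/andP [h1 _] /andP [_ h2]].
by apply: PQA; split; [apply: H1 | apply: H2].
Qed.

Lemma rP_ball (p : M * M) r : 0 < r -> nbhs p [set q | rP p q < r].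
Proof.
case: p => a b r0; exists ([set y | rho a y < r], [set y | rho b y < r]).
  by split; apply: rho_ball_nbhs.
by case=> a' b' [/= h1 h2]; rewrite /rP /= gt_max h1 h2.
Qed.

Lemma rP_tri p q s : rP p s <= rP p q + rP q s.
Proof.
case: hrho => _ _ _ tri _.
rewrite /rP ge_max; apply/andP; split.
  apply: (le_trans (tri _ q.1 _)); apply: lerD; by rewrite le_max lexx.
apply: (le_trans (tri _ q.2 _)); apply: lerD; by rewrite le_max lexx orbT.
Qed.

Lemma mul_uc (L1 L2 : set M) : compact L1 -> compact L2 -> forall eps, 0 < eps ->
  exists2 d, 0 < d & forall a b a' b', L1 a -> L2 b -> rho a a' < d -> rho b b' < d ->
    rho (mul a b) (mul a' b') < eps.
Proof.
move=> c1 c2 eps eps0.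
have cm : continuous (fun p : M * M => mul p.1 p.2) by case: hG.
have [d d0 H] := UC hrho rP_nb rP_ball rP_tri cm (compact_setX c1 c2) _ eps0.
exists d => // a b a' b' La Lb h1 h2.
by apply: (H (a, b) (a', b')) => //; rewrite /rP /= gt_max h1 h2.
Qed.

Lemma uopen_mul (U : set (X -> M)) f g : uopen e rho U -> Ccpt e f -> Ccpt e g ->
  U (fmul mul f g) ->
  exists V W, [/\ uopen e rho V, uopen e rho W, V f, W g &
           forall f' g', V f' -> W g' -> U (fmul mul f' g')].
Proof.
move=> [UCs HU] Cf Cg Ufg.
have [eps eps0 He] := HU _ Ufg.
have [L1 c1 H1] := range_cpt Cf.
have [L2 c2 H2] := range_cpt Cg.
have e2 : 0 < eps / 2 by rewrite divr_gt0.
have [d d0 Hd] := mul_uc c1 c2 e2.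
exists [set h | Ccpt e h /\ dlt rho f h d], [set h | Ccpt e h /\ dlt rho g h d].
split; try exact: ball_uopen; try by split => //; exact: ball_self.
move=> f' g' [Cf' [d1 d1d Hd1]] [Cg' [d2 d2d Hd2]].
apply: He; first exact: fmul_Ccpt.
exists (eps / 2); first by rewrite ltr_pdivrMr // ltr_pMr // ltr1n.
move=> x; apply: ltW; rewrite /fmul; apply: Hd => //.
  exact: le_lt_trans (Hd1 x) d1d.
exact: le_lt_trans (Hd2 x) d2d.
Qed.

Lemma uopen_inv (U : set (X -> M)) : uopen e rho U ->
  uopen e rho [set f | Ccpt e f /\ U (Defs.finv inv f)].
Proof.
move=> [UCs HU]; split; first by move=> f [].
move=> f [Cf Uif].
have [eps eps0 He] := HU _ Uif.
have [L c H] := range_cpt Cf.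
have e2 : 0 < eps / 2 by rewrite divr_gt0.
have ci : continuous inv by case: hG.
case: (hrho) => _ _ _ tri _.
have [d d0 Hd] := UC hrho (nbhs_rho_ball hrho) (rho_ball_nbhs hrho) tri ci c _ e2.
exists d => // g Cg [d1 d1d Hd1]; split => //.
apply: He; first exact: finv_Ccpt.
exists (eps / 2); first by rewrite ltr_pdivrMr // ltr_pMr // ltr1n.
move=> x; apply: ltW; rewrite /Defs.finv; apply: Hd => //.
exact: le_lt_trans (Hd1 x) d1d.
Qed.

End TopGroup.


Unset Implicit Arguments.
Set Strict Implicit.

Lemma real_archi (R : realType) (eps : R) : 0 < eps -> exists n : nat, n.+1%:R^-1 <= eps.
Proof.
move=> eps0; exists (Num.truncn eps^-1).
have h := truncnS_gt eps^-1.
move: h; set n := Num.truncn eps^-1 => h.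
rewrite -[X in _ <= X]invrK ler_pV2 ?ltW //.
- by rewrite inE /= unitfE gt_eqF ?ltr0Sn.
- by rewrite inE /= unitfE gt_eqF ?invr_gt0.
Qed.

Lemma part1 (X : topologicalType) (hX : long_space X) :
  forall (R : realType) (M : topologicalType) (mul : M -> M -> M)
          (inv : M -> M) (e : M) (rho : M -> M -> R),
     is_topgroup mul inv e -> compatible_metric rho ->
     [/\ (forall C D : set X, compact C -> compact D -> C `<=` D ->
            sub_open e rho (CK e D) (CK e D `\` CK e C)),
         ACP_CK X mul inv e rho &
         forall U : set (X -> M), colim_open e rho U <-> uopen e rho U].
Proof.
move=> R M mul inv e rho hG hrho.
have EQ : forall U : set (X -> M), colim_open e rho U <-> uopen e rho U.
  move=> U; split; last exact: uopen_colim.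
  apply: (@colim_uopen X M e R rho hX (fun n => n.+1%:R^-1)).
    by move=> n; rewrite invr_gt0 ltr0Sn.
  exact: real_archi.
split => //.
- move=> C D cC _ _; apply: CK_diff_open => //; first by case: hrho.
    by case: hrho => _ H _ _ _.
  exact: hX.1.
- have E : colim_open e rho = uopen e rho :> (set (X -> M) -> Prop).
    by apply: funext => U; apply: propext; exact: EQ.
  split; first rewrite E.
    split.
    + exact: (uopen_topology X e rho).
    + move=> f g; exact: (fmul_Ccpt hG).
    + move=> f; exact: (finv_Ccpt hG).
    + move=> U f g; exact: (uopen_mul hG hrho).
    + move=> U; exact: (uopen_inv hG hrho).
  move=> tau [[sub _ _ _] _ _ _ _] Hinc U tU; split; first exact: sub.
  by move=> K cK; apply: Hinc.
Qed.


Section BanachGen.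
Context (K : numFieldType) (X : topologicalType) (M : completeNormedModType K).
Hypothesis archK : forall x : K, 0 < x -> exists n : nat, x < n%:R.
Hypothesis hX : long_space X.

Notation Cc := (Ccpt (0 : M) : set (X -> M)).

Lemma sK (eps : K) : 0 < eps -> exists n : nat, n.+1%:R^-1 <= eps.
Proof.
move=> e0; have [n Hn] : exists n : nat, eps^-1 < n%:R by apply: archK; rewrite invr_gt0.
exists n; apply: ltW; rewrite invf_plt ?posrE ?ltr0Sn //.
by apply: (lt_le_trans Hn); rewrite ler_nat.
Qed.

Lemma Cc0 : Cc (fun _ => 0).
Proof.
split; first exact: cst_continuous.
rewrite /supp (_ : [set x | _] = set0) ?closure0; first exact: compact0.
by apply/seteqP; split => x //=.
Qed.

Lemma Cc_lin (a : K) f g : Cc f -> Cc g -> Cc (fun x => a *: f x + g x).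
Proof.
move=> [cf sf] [cg sg]; split.
  move=> x; apply: (@continuousD _ _ _ (fun x => a *: f x) g).
    exact: (@continuousZl_tmp _ _ _ f a x (cf x)).
  exact: cg.
by apply: (@Ccpt_sub _ _ _ f g _ sf sg) => x -> ->; rewrite scaler0 addr0.
Qed.

Lemma Cc_bounded f : Cc f -> exists B : K, forall x, `|f x| <= B.
Proof.
move=> [cf sf].
have H : \forall n \near \oo, supp 0 f `<=` (fun x => `|f x| < n%:R).
  apply: ((compact_near_coveringP _).1 sf nat \oo (fun n x => `|f x| < n%:R)).
  move=> x _.
  have [N HN] := archK _ (ltr_wpDl (normr_ge0 (f x)) ltr01).
  have Hb : \forall x' \near x, ball (f x) 1 (f x').
    exact: (cf x _ (nbhsx_ballx (f x) 1 ltr01)).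
  near=> x' n.
  have bx : ball (f x) 1 (f x') by exact: (near Hb x').
  have Nn : (N <= n)%N by exact: (near (nbhs_infty_ge N) n).
  move: bx; rewrite -ball_normE /= => bx.
  have := ler_normD (f x) (f x' - f x); rewrite addrC subrK => h.
  apply: (le_lt_trans h); apply: (lt_le_trans _ (_ : N%:R <= n%:R)); last by rewrite ler_nat.
  apply: lt_trans HN; rewrite ltrD2l distrC //.
have [n Hn] := filter_ex H.
exists n%:R => x; have [sx|nsx] := pselect (supp 0 f x); first exact/ltW/Hn.
by rewrite (supp_out nsx) normr0 ler0n.
Unshelve. all: by end_near.
Qed.


Lemma half_lt (eps : K) : 0 < eps -> eps / 2 < eps.
Proof. by move=> e0; rewrite ltr_pdivrMr // ltr_pMr // ltr1n. Qed.

Lemma third3 (a b c eps : K) : a < eps / 3 -> b < eps / 3 -> c < eps / 3 ->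
  a + b + c < eps.
Proof.
move=> ha hb hc; have := ltrD (ltrD ha hb) hc.
suff -> : eps / 3 + eps / 3 + eps / 3 = eps by [].
by field.
Qed.

Lemma Cc_complete (u : nat -> X -> M) : (forall n, Cc (u n)) ->
  (forall eps : K, 0 < eps -> exists N, forall m n, (N <= m)%N -> (N <= n)%N ->
            dlt (@nrho K M) (u m) (u n) eps) ->
  exists2 f, Cc f & forall eps : K, 0 < eps ->
            exists N, forall n, (N <= n)%N -> dlt (@nrho K M) (u n) f eps.
Proof.
move=> Cu Hc.
have Hc' : forall eps : K, 0 < eps -> exists N, forall m n x, (N <= m)%N -> (N <= n)%N ->
    `|u m x - u n x| < eps.
  move=> eps e0; have [N HN] := Hc _ e0; exists N => m n x Nm Nn.
  by have [d dl Hd] := HN m n Nm Nn; exact: le_lt_trans (Hd x) dl.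
have cv : forall x, cvg (u ^~ x @ \oo).
  move=> x; apply: cauchy_cvg; apply/cauchy_ballP => eps e0.
  have [N HN] := Hc' _ e0.
  exists ([set u m x | m in [set m | (N <= m)%N]], [set u m x | m in [set m | (N <= m)%N]]).
    by split; apply: filterS (nbhs_infty_ge N) => m Nm; exists m.
  by case=> y z [[m Nm <-] [n Nn <-]] /=; rewrite -ball_normE /=; exact: HN.
pose f x := lim (u ^~ x @ \oo).
have unif : forall eps : K, 0 < eps -> exists N, forall n x, (N <= n)%N -> `|u n x - f x| < eps.
  move=> eps e0; have e2 : 0 < eps / 2 by rewrite divr_gt0.
  have [N HN] := Hc' _ e2; exists N => n x Nn.
  have : \forall m \near \oo, ball (f x) (eps / 2) (u m x) /\ (N <= m)%N.
    apply: filterI; last exact: nbhs_infty_ge.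
    exact: (cv x _ (nbhsx_ballx (f x) _ e2)).
  move=> /filter_ex [m [bm Nm]]; move: bm; rewrite -ball_normE /= => bm.
  apply: (le_lt_trans (ler_distD (u m x) _ _)); rewrite [eps]splitr.
  by apply: ltrD; [exact: HN | rewrite distrC].
have f0 : forall x, (forall n, u n x = 0) -> f x = 0.
  move=> x H; apply: contrapT => fx.
  have p : 0 < `|f x| by rewrite normr_gt0; apply/eqP.
  have [N HN] := unif _ p.
  by have := HN N x (leqnn N); rewrite H sub0r normrN ltxx.
have Cf : Cc f.
  split.
    move=> x; apply/(@cvgrPdist_lt _ _ _ (nbhs x) (nbhs_filter x) f (f x)) => eps e0.
    have e3 : 0 < eps / 3 by rewrite divr_gt0.
    have [N HN] := unif _ e3.
    have := (@cvgrPdist_lt _ _ _ (nbhs x) (nbhs_filter x) (u N) (u N x)).1 ((Cu N).1 x) _ e3.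
    move=> H; near=> t; have Ht : `|u N x - u N t| < eps / 3 by exact: (near H t).
    apply: (le_lt_trans (ler_distD (u N x) _ _)).
    apply: (le_lt_trans (lerD (lexx _) (ler_distD (u N t) _ _))).
    rewrite addrA; apply: third3 => //; first by rewrite distrC; apply: HN.
    by apply: HN.
  pose A n := supp 0 (u n).
  have cK : compact (closure (\bigcup_n A n)) by apply: hX.2; exists A; split => // n; case: (Cu n).
  apply: (subclosed_compact _ cK); first exact: closed_closure.
  apply: closureS => x /= fx; apply: contrapT => nx; apply: fx; apply: f0 => n.
  apply: contrapT => unx; apply: nx; exists n => //; exact: subset_closure.
exists f => // eps e0; have e2 : 0 < eps / 2 by rewrite divr_gt0.
have [N HN] := unif _ e2; exists N => n Nn; exists (eps / 2); first exact: half_lt.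
by move=> x; apply: ltW; exact: HN.
Unshelve. all: by end_near.
Qed.


Lemma colim_uopen_K (U : set (X -> M)) : colim_open 0 (@nrho K M) U -> uopen 0 (@nrho K M) U.
Proof.
apply: (@colim_uopen X M 0 K (@nrho K M) hX (fun n => n.+1%:R^-1)).
  by move=> n; rewrite invr_gt0 ltr0Sn.
exact: sK.
Qed.

Lemma colim_univ_gen (E : topologicalLmodType K) : colim_univ X M E.
Proof.
move=> phi Hphi Hcomp.
have CKs : forall f : X -> M, Cc f -> CK 0 (supp 0 f) f by move=> f Cf; split.
have agree : forall C f, compact C -> CK 0 C f -> phi (supp 0 f) f = phi C f.
  move=> C f cC CKf; have Cf := CKf.1.
  by apply/esym; apply: (Hcomp (supp 0 f) C Cf.2 cC CKf.2 f (CKs f Cf)).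
split.
  exists (fun f => phi (supp 0 f) f); split.
  - move=> a f g Cf Cg; have Ch := Cc_lin a f g Cf Cg.
    set h := (fun x => a *: f x + g x) in Ch *.
    pose C := supp 0 f `|` supp 0 g `|` supp 0 h.
    have cC : compact C by apply: compactU; [apply: compactU; [case: Cf|case: Cg]|case: Ch].
    rewrite (agree C h cC); last by split => // x Hx; right.
    rewrite (agree C f cC); last by split => // x Hx; left; left.
    rewrite (agree C g cC); last by split => // x Hx; left; right.
    apply: (Hphi C cC).1.
      by split => // x Hx; left; left.
    by split => // x Hx; left; right.
  - move=> W oW; exists (Cc `&` (fun f => phi (supp 0 f) f) @^-1` W); last first.
      by apply/seteqP; split => f; [move=> [Cf Wf]; split | move=> [[]]].
    apply: colim_uopen_K; split; first by move=> f [].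
    move=> C cC; have [W' uW' EW'] := (Hphi C cC).2 W oW.
    exists W' => //; rewrite -EW'.
    apply/seteqP; split => f.
      by move=> [[Cf Wf] CKf]; split => //; rewrite /= -(agree C f cC CKf).
    by move=> [CKf Wf]; split => //; split; [case: CKf | rewrite /= (agree C f cC CKf)].
  - by move=> C cC f CKf; exact: agree.
move=> psi1 psi2 [_ [_ H1]] [_ [_ H2]] f Cf.
have cs : compact (supp 0 f) by case: Cf.
by rewrite (H1 _ cs f (CKs f Cf)) (H2 _ cs f (CKs f Cf)).
Qed.


Lemma banach_gen : banach_part X M.
Proof.
split.
- split.
  + exact: Cc0.
  + move=> a f g; exact: Cc_lin.
  + move=> f; exact: Cc_bounded.
  + move=> u; exact: Cc_complete.
- by move=> C cC U uU; exists U.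
- move=> E; exact: colim_univ_gen.
- move=> E; exact: colim_univ_gen.
Qed.

End BanachGen.


Lemma complex_archi (R : realType) (x : R[i]) : 0 < x -> exists n : nat, x < n%:R.
Proof.
rewrite ltcE => /andP [/eqP Im0 Re0].
exists (Num.truncn (complex.Re x)).+1.
rewrite -(rmorph_nat (real_complex R)) ltcE /= Im0 /= eqxx /=.
exact: truncnS_gt.
Qed.

Lemma real_archi2 (R : realType) (x : R) : 0 < x -> exists n : nat, x < n%:R.
Proof. by move=> _; exists (Num.truncn x).+1; exact: truncnS_gt. Qed.

End Helpers.

Theorem mainTheorem1 (X : topologicalType) (hX : long_space X) :
  (forall (R : realType) (M : topologicalType) (mul : M -> M -> M)
          (inv : M -> M) (e : M) (rho : M -> M -> R),
     is_topgroup mul inv e -> compatible_metric rho ->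
     [/\ (forall C D : set X, compact C -> compact D -> C `<=` D ->
            sub_open e rho (CK e D) (CK e D `\` CK e C)),
         ACP_CK X mul inv e rho &
         forall U : set (X -> M), colim_open e rho U <-> uopen e rho U]) /\
  (forall R : realType,
     (forall M : completeNormedModType R, banach_part X M) /\
     (forall M : completeNormedModType R[i], banach_part X M)).
Proof.
Proof.
split; first exact: Helpers.part1.
move=> R; split => M.
  exact: (@Helpers.banach_gen R X M (@Helpers.real_archi2 R) hX).
exact: (@Helpers.banach_gen R[i] X M (@Helpers.complex_archi R) hX).
Qed.
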